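(* Let $\omega\in I^{\mathbb N}$, $k\in\mathbb N$, $m_i=\#\{1\le j\le k:\omega_j=i\}$ for $i\in I$, $\vec m=(m_1,\dots,m_s)$, and $\vec 0\le\vec r\le\vec q$ in $\mathbb N_0^s$. Then $$A(\omega,k)_{\vec q,\vec r}=\sum_{\substack{\vec t\in\mathbb N_0^s:\ \vec q-\vec r-\vec m\le\vec t\le\vec q-\vec r\\ |\vec t|\le m_{s+1}}}(-1)^{|\vec t|}p_{s+1}^{-|\vec t|}\frac{m_{s+1}!}{(m_{s+1}-|\vec t|)!}\prod_{i=1}^s\frac{m_i!\,q_i!}{(m_i-(q_i-r_i-t_i))!\,(q_i-r_i-t_i)!\,t_i!\,r_i!\,p_i^{q_i-r_i-t_i}}.$$ Consequently there is $K\ge1$ depending on $\vec q$ and $\vec p$ but not on $k$ or $\omega$ with $|A(\omega,k)_{\vec q,\vec r}|\le K\big(\prod_{i=1}^s\tilde m_i^{q_i-r_i}\big)\tilde m_{s+1}^{|\vec q|-|\vec r|}$ and $|A(\omega,k)_{\vec q,\vec r}|\le Kk^{|\vec q|}$, where $\tilde m_j=\max\{1,m_j\}$. If $\omega_j\ne s+1$ for all $1\le j\le k$ and $m_i>q_i-r_i$ for all $i\le s$, then $A(\omega,k)_{\vec q,\vec r}\ge K'\prod_{i=1}^sm_i^{q_i-r_i}$ for a constant $K'>0$ depending only on $\vec q$.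
   Context: $s\ge1$, $I=\{1,\dots,s+1\}$, $\vec p=(p_1,\dots,p_s)\in(0,1)^s$ with $\sum p_i<1$, $p_{s+1}=1-\sum_{i\le s}p_i$. Matrices are indexed by $\mathbb N_0^s\times\mathbb N_0^s$ with the usual product; $\mathrm{Id}$ the identity; $1_{\vec n,\vec m}$ has a single entry $1$ at $(\vec n,\vec m)$; $\vec e_i$ the unit vectors; $D_i=\sum_{\vec n}n_i1_{\vec n,\vec n-\vec e_i}$. For $\omega\in I^{\mathbb N}$, $A_0(\omega,1)=p_{\omega_1}\mathrm{Id}+D_{\omega_1}$ if $\omega_1\le s$ and $A_0(\omega,1)=p_{s+1}\mathrm{Id}-\sum_{i\le s}D_i$ if $\omega_1=s+1$; $A_0(\omega,k)=A_0(\omega,1)A_0(\sigma\omega,1)\cdots A_0(\sigma^{k-1}\omega,1)$ with $\sigma$ the left shift; $A(\omega,k)=(p_{\omega_1}\cdots p_{\omega_k})^{-1}A_0(\omega,k)$. $\vec a\le\vec b$ is componentwise, $|\vec t|=\sum t_i$. *)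

(* Defs.v *)
From HB Require Import structures.
From mathcomp Require Import all_boot all_order all_algebra.
Set Implicit Arguments. Unset Strict Implicit. Unset Printing Implicit Defensive.
Import Order.TTheory GRing.Theory Num.Theory.
Local Open Scope ring_scope.

(* Vectors in N_0^s : finite functions 'I_s -> nat (coordinate i : 'I_s is the
   paper's coordinate i+1). *)
Definition vec (s : nat) := {ffun 'I_s -> nat}.

Definition vle s (a b : vec s) : bool := [forall i, (a i <= b i)%N].

Definition vnorm s (t : vec s) : nat := (\sum_(i < s) t i)%N.

Definition unitv s (i : 'I_s) : vec s := [ffun j => nat_of_bool (j == i)].

Definition vadd s (a b : vec s) : vec s := [ffun j => (a j + b j)%N].

(* Finite sum of F l over all l in N_0^s with l <= v componentwise. *)
Definition sumle (R : nmodType) s (v : vec s) (F : vec s -> R) : R :=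
  \sum_(l : {ffun 'I_s -> 'I_(vnorm v).+1} | [forall i, (l i <= v i)%N])
     F [ffun i => nat_of_ord (l i)].

Definition mat (R : Type) s := vec s -> vec s -> R.

(* Matrix product  (A B)_{a,b} = sum_l A_{a,l} B_{l,b}, where the sum is taken over
   l <= a: all matrices used below are "lower" (A_{a,l} = 0 unless l <= a), so this
   finite sum is the usual matrix product. *)
Definition mulM (R : pzRingType) s (A B : mat R s) : mat R s :=
  fun a b => sumle a (fun l => A a l * B l b).

Definition IdM (R : pzRingType) {s} : mat R s := fun a b => (a == b)%:R.

(* D_i = sum_n n_i 1_{n, n - e_i} : entry (a,b) is a_i if b + e_i = a, else 0 *)
Definition DM (R : pzRingType) {s} (i : 'I_s) : mat R s :=
  fun a b => (a i)%:R * (vadd b (unitv i) == a)%:R.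

(* I = {1..s+1} is represented by 'I_s.+1, the last element ord_max being s+1 and
   lift ord_max i (i : 'I_s) being the paper's i+1. *)
Definition plast (R : pzRingType) s (p : 'I_s -> R) : R := 1 - \sum_(i < s) p i.

Definition pI (R : pzRingType) s (p : 'I_s -> R) (j : 'I_s.+1) : R :=
  match unlift ord_max j with
  | Some i => p i
  | None => plast p
  end.

(* omega : nat -> 'I_s.+1 ; only omega 1, omega 2, ... are used. *)
Definition shift s (w : nat -> 'I_s.+1) : nat -> 'I_s.+1 := fun j => w j.+1.

Definition A01 (R : pzRingType) s (p : 'I_s -> R) (w : nat -> 'I_s.+1) : mat R s :=
  fun a b =>
    match unlift ord_max (w 1%N) with
    | Some i => p i * IdM R a b + DM R i a b
    | None => plast p * IdM R a b - \sum_(i < s) DM R i a b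
    end.

Fixpoint A0 (R : pzRingType) s (p : 'I_s -> R) (k : nat) (w : nat -> 'I_s.+1)
  : mat R s :=
  match k with
  | 0 => IdM R
  | k'.+1 => mulM (A01 p w) (A0 p k' (shift w))
  end.

Definition AM (R : fieldType) s (p : 'I_s -> R) (w : nat -> 'I_s.+1) (k : nat)
  : mat R s :=
  fun a b => (\prod_(j < k) pI p (w j.+1))^-1 * A0 p k w a b.

Definition mcount s (w : nat -> 'I_s.+1) (k : nat) (i : 'I_s.+1) : nat :=
  count (fun j => w j == i) (iota 1 k).

Definition mtilde s (w : nat -> 'I_s.+1) (k : nat) (i : 'I_s.+1) : nat :=
  maxn 1 (mcount w k i).

(* Main.v *)
Require Import Defs.
From HB Require Import structures.
From mathcomp Require Import all_boot all_order all_algebra.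
From mathcomp Require Import zify ring lra.
Set Implicit Arguments. Unset Strict Implicit. Unset Printing Implicit Defensive.
Import Order.TTheory GRing.Theory Num.Theory.
Local Open Scope ring_scope.

Definition vo s N (l : {ffun 'I_s -> 'I_N}) : vec s := [ffun i => nat_of_ord (l i)].
Definition BS (R : nmodType) s N (F : vec s -> R) : R :=
  \sum_(l : {ffun 'I_s -> 'I_N}) F (vo l).
Definition inbox s N (a : vec s) : bool := [forall i, (a i < N)%N].
Definition vsub s (a b : vec s) : vec s := [ffun i => (a i - b i)%N].
Definition vzero s : vec s := [ffun _ => 0%N].

Lemma inbox_vo s N (l : {ffun 'I_s -> 'I_N}) : inbox N (vo l).
Proof. by apply/forallP => i; rewrite ffunE. Qed.

Lemma BS_dirac (R : pzRingType) s N (a : vec s) (F : vec s -> R) :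
  BS N (fun t => (t == a)%:R * F t) = (inbox N a)%:R * F a.
Proof.
case: (boolP (inbox N a)) => ha.
- have hi : forall i, (a i < N)%N by move/forallP: ha.
  pose l0 : {ffun 'I_s -> 'I_N} := [ffun i => Ordinal (hi i)].
  have vl0 : vo l0 = a by apply/ffunP => i; rewrite !ffunE.
  rewrite /BS (bigD1 l0) //= vl0 eqxx mul1r big1 ?addr0 //.
  move=> l hl; case: eqP => [e|]; last by rewrite mul0r.
  exfalso; move/eqP: hl; apply; apply/ffunP => i; apply: val_inj.
  by have := congr1 (fun f : vec s => f i) e; rewrite !ffunE /=.
- rewrite mul0r /BS big1 // => l _; case: eqP => [e|]; last by rewrite mul0r.
  exfalso; move/negP: ha; apply; rewrite -e; exact: inbox_vo.
Qed.

Lemma BS_diracc (R : pzRingType) s N (a : vec s) (c : R) :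
  BS N (fun t => (t == a)%:R * c) = (inbox N a)%:R * c.
Proof. exact: (BS_dirac N a (fun _ => c)). Qed.

Lemma BS_ext (R : nmodType) s N (F G : vec s -> R) :
  (forall t, inbox N t -> F t = G t) -> BS N F = BS N G.
Proof. by move=> h; apply: eq_bigr => l _; apply: h; apply: inbox_vo. Qed.

Lemma BS_add (R : nmodType) s N (F G : vec s -> R) :
  BS N (fun t => F t + G t) = BS N F + BS N G.
Proof. exact: big_split. Qed.

Lemma BS_sum (R : nmodType) s N n (F : 'I_n -> vec s -> R) :
  BS N (fun t => \sum_(j < n) F j t) = \sum_(j < n) BS N (F j).
Proof. exact: exchange_big. Qed.

Lemma BS_mull (R : pzRingType) s N (c : R) (F : vec s -> R) :
  BS N (fun t => c * F t) = c * BS N F.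
Proof. by rewrite /BS mulr_sumr. Qed.

Lemma vle_inbox s N (t v : vec s) : vle t v -> inbox N v -> inbox N t.
Proof.
move=> /forallP h /forallP h'; apply/forallP => i.
exact: leq_ltn_trans (h i) (h' i).
Qed.

Lemma BS_N (R : pzRingType) s M N (v : vec s) (G : vec s -> R) :
  (forall t, ~~ vle t v -> G t = 0) -> inbox M v -> inbox N v ->
  BS M G = BS N G.
Proof.
move=> hG hM hN.
have key : forall N', inbox N' v -> forall t, G t = (inbox N' t)%:R * G t.
  move=> N' hN' t; case: (boolP (vle t v)) => ht.
    by rewrite (vle_inbox ht hN') mul1r.
  by rewrite hG // mulr0.
transitivity (BS M (fun t => BS N (fun t' => (t' == t)%:R * G t'))).
  by apply: eq_bigr => l _; rewrite BS_dirac -key.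
rewrite /BS exchange_big /=; apply: eq_bigr => l _.
transitivity (BS M (fun t => (t == vo l)%:R * G (vo l))).
  by apply: eq_bigr => l' _; rewrite eq_sym.
by rewrite BS_diracc -key.
Qed.

Lemma le_vnorm s (v : vec s) i : (v i <= vnorm v)%N.
Proof. by rewrite /vnorm (bigD1 i) //= leq_addr. Qed.

Lemma inbox_vnorm s (v : vec s) : inbox (vnorm v).+1 v.
Proof. by apply/forallP => i; rewrite ltnS le_vnorm. Qed.

Lemma sumleE (R : pzRingType) s N (v : vec s) (F : vec s -> R) :
  inbox N v -> sumle v F = BS N (fun t => (vle t v)%:R * F t).
Proof.
move=> hN.
have -> : sumle v F = BS (vnorm v).+1 (fun t => (vle t v)%:R * F t).
  rewrite /sumle /BS big_mkcond; apply: eq_bigr => l _.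
  have -> : [forall i, (l i <= v i)%N] = vle (vo l) v.
    by apply: eq_forallb => i; rewrite ffunE.
  by case: (vle _ _); rewrite ?mul1r ?mul0r.
apply: BS_N (inbox_vnorm v) hN => t /negbTE ->; by rewrite mul0r.
Qed.

Lemma sumle_ext (R : pzRingType) s (v : vec s) (F G : vec s -> R) :
  (forall t, vle t v -> F t = G t) -> sumle v F = sumle v G.
Proof.
move=> h; rewrite !(sumleE _ (inbox_vnorm v)); apply: BS_ext => t _.
by case: (boolP (vle t v)) => ht; [rewrite h | rewrite !mul0r].
Qed.
Lemma sumle_add (R : nmodType) s (v : vec s) (F G : vec s -> R) :
  sumle v (fun t => F t + G t) = sumle v F + sumle v G.
Proof. exact: big_split. Qed.

Lemma sumle_sum (R : nmodType) s (v : vec s) n (F : 'I_n -> vec s -> R) :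
  sumle v (fun t => \sum_(j < n) F j t) = \sum_(j < n) sumle v (F j).
Proof. exact: exchange_big. Qed.

Lemma sumle_mull (R : pzRingType) s (v : vec s) (c : R) (F : vec s -> R) :
  sumle v (fun t => c * F t) = c * sumle v F.
Proof. by rewrite /sumle mulr_sumr. Qed.

Lemma unitvE s (i j : 'I_s) : unitv i j = (j == i) :> nat.
Proof. by rewrite ffunE. Qed.

Lemma vsubE s (a b : vec s) i : vsub a b i = (a i - b i)%N.
Proof. by rewrite ffunE. Qed.

Lemma vaddE s (a b : vec s) i : vadd a b i = (a i + b i)%N.
Proof. by rewrite ffunE. Qed.

Lemma veq_add_sub s (t a : vec s) j :
  (vadd t (unitv j) == a) = (0 < a j)%N && (t == vsub a (unitv j)).
Proof.
apply/eqP/andP => [e|[ha /eqP e]].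
  have ea : forall i, (t i + (i == j))%N = a i.
    by move=> i; have := congr1 (fun f : vec s => f i) e; rewrite !ffunE.
  split; first by rewrite -(ea j) eqxx addn1.
  apply/eqP/ffunP => i; rewrite !ffunE -(ea i).
  by case: (i == j) => /=; rewrite ?addn1 ?subn1 ?addn0 ?subn0.
apply/ffunP => i; rewrite !ffunE e !ffunE.
case: (eqVneq i j) => [->|_] /=; rewrite ?addn1 ?subn1 ?addn0 ?subn0 //.
by rewrite prednK.
Qed.

Lemma vle_refl s (a : vec s) : vle a a.
Proof. by apply/forallP. Qed.

Lemma vle_sub s (a b : vec s) : vle (vsub a b) a.
Proof. by apply/forallP => i; rewrite ffunE leq_subr. Qed.

Lemma sumle_Id (R : pzRingType) s (a : vec s) (Y : vec s -> R) :
  sumle a (fun l => IdM R a l * Y l) = Y a.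
Proof.
rewrite (sumleE _ (inbox_vnorm a)).
transitivity (BS (vnorm a).+1 (fun t => (t == a)%:R * Y t)).
  apply: BS_ext => t _; rewrite /IdM eq_sym.
  by case: eqP => [->|_]; rewrite ?vle_refl ?mul1r ?mul0r ?mulr0.
by rewrite BS_dirac inbox_vnorm mul1r.
Qed.

Lemma sumle_D (R : pzRingType) s (a : vec s) j (Y : vec s -> R) :
  sumle a (fun l => DM R j a l * Y l) = (a j)%:R * Y (vsub a (unitv j)).
Proof.
rewrite (sumleE _ (inbox_vnorm a)).
transitivity (BS (vnorm a).+1 (fun t => (t == vsub a (unitv j))%:R * ((a j)%:R * Y t))).
  apply: BS_ext => t _; rewrite /DM veq_add_sub.
  case: (posnP (a j)) => [->|hj]; first by rewrite /= !(mul0r, mulr0).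
  case: eqP => [->|_]; last by rewrite !(mul0r, mulr0).
  by rewrite vle_sub /= !mul1r mulr1.
rewrite (BS_dirac _ _ (fun t => (a j)%:R * Y t)) (vle_inbox (vle_sub _ _) (inbox_vnorm a)) mul1r.
by [].
Qed.
Definition Hc (R : fieldType) s (x : R) (M : nat) (t : vec s) : R :=
  (- x) ^+ vnorm t * (M ^_ vnorm t)%:R / \prod_(i < s) (t i)`!%:R.
Definition Bc (R : fieldType) s (p : 'I_s -> R) (m : 'I_s -> nat) (u : vec s) : R :=
  \prod_(i < s) ('C(m i, u i)%:R * (p i)^-1 ^+ u i).
Definition term (R : fieldType) s (p : 'I_s -> R) m M (v t : vec s) : R :=
  (vle t v)%:R * Hc (plast p)^-1 M t * Bc p m (vsub v t).
Definition G (R : fieldType) s (p : 'I_s -> R) m M (v : vec s) : R :=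
  sumle v (term p m M v).

Lemma vle_trans s (a b c : vec s) : vle a b -> vle b c -> vle a c.
Proof.
move=> /forallP h1 /forallP h2; apply/forallP => i; exact: leq_trans (h1 i) (h2 i).
Qed.

Lemma G_BS (R : fieldType) s (p : 'I_s -> R) m M N v :
  inbox N v -> G p m M v = BS N (term p m M v).
Proof.
move=> h; rewrite /G (sumleE _ h); apply: BS_ext => t _.
by rewrite /term; case: (vle t v); rewrite ?mul1r ?mul0r.
Qed.

Lemma vle_subA s (t v : vec s) i : vle t (vsub v (unitv i)) -> vle t v.
Proof. by move=> h; apply: vle_trans h (vle_sub _ _). Qed.

Lemma vle_subB s (t v : vec s) i : vle t v -> (t i < v i)%N -> vle t (vsub v (unitv i)).
Proof.
move=> /forallP h hi; apply/forallP => j.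
rewrite !ffunE; case: (eqVneq j i) => [->|_] /=; first by rewrite subn1 -ltnS prednK //; lia.
by rewrite subn0 h.
Qed.

Lemma vle_subC s (t v : vec s) i : (0 < v i)%N -> vle t (vsub v (unitv i)) -> (t i < v i)%N.
Proof. by move=> hv /forallP /(_ i); rewrite !ffunE eqxx /=; lia. Qed.

Lemma term_I1 (R : fieldType) s (p : 'I_s -> R) m M v t i :
  term p (fun j => ((i == j) + m j)%N) M v t =
  term p m M v t + (0 < v i)%:R * (p i)^-1 * term p m M (vsub v (unitv i)) t.
Proof.
rewrite /term.
case: (boolP (vle t v)) => hv /=; last first.
  have -> : vle t (vsub v (unitv i)) = false.
    by apply/negP => /vle_subA; rewrite (negbTE hv).
  by rewrite !mul0r mulr0 addr0.
have hti := forallP hv i.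
case: (ltnP (t i) (v i)) => hlt; last first.
  have eti : t i = v i by apply/eqP; rewrite eqn_leq hti hlt.
  have -> : (0 < v i)%:R * (p i)^-1 * ((vle t (vsub v (unitv i)))%:R * Hc (plast p)^-1 M t *
    Bc p m (vsub (vsub v (unitv i)) t)) = 0.
    case: (posnP (v i)) => [_|hp]; first by rewrite !mul0r.
    have -> : vle t (vsub v (unitv i)) = false.
      by apply/negP => /(vle_subC hp); lia.
    by rewrite !mul0r mulr0.
  rewrite addr0; congr (_ * _); apply: eq_bigr => j _.
  case: (eqVneq i j) => [<-|hij]; last by rewrite add0n.
  by rewrite ffunE eti subnn !bin0.
have hvi : (0 < v i)%N by lia.
rewrite hvi (vle_subB hv hlt) !mul1r.
have [u hu] : exists u, (v i - t i = u.+1)%N by exists (v i - t i).-1; lia.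
rewrite /Bc.
rewrite (bigD1 i (F := fun j => ('C(((i == j) + m j)%N, _)%:R * _))) //=.
rewrite (bigD1 i (F := fun j => ('C(m j, vsub v t j)%:R * _))) //=.
rewrite (bigD1 i (F := fun j => ('C(m j, vsub (vsub v (unitv i)) t j)%:R * _))) //=.
have -> : \prod_(j < s | j != i)
     ('C(((i == j) + m j)%N, vsub v t j)%:R * (p j)^-1 ^+ vsub v t j)
   = \prod_(j < s | j != i) ('C(m j, vsub v t j)%:R * (p j)^-1 ^+ vsub v t j).
  by apply: eq_bigr => j hj; rewrite eq_sym (negbTE hj).
have -> : \prod_(j < s | j != i)
     ('C(m j, vsub (vsub v (unitv i)) t j)%:R * (p j)^-1 ^+ vsub (vsub v (unitv i)) t j)
   = \prod_(j < s | j != i) ('C(m j, vsub v t j)%:R * (p j)^-1 ^+ vsub v t j).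
  by apply: eq_bigr => j hj; rewrite !vsubE unitvE (negbTE hj) subn0.
rewrite !vsubE unitvE eqxx /= hu.
have -> : (v i - 1 - t i)%N = u by lia.
rewrite add1n binS natrD exprS.
ring.
Qed.
Lemma ffact_pascal n m : (n.+1 ^_ m.+1 = n ^_ m.+1 + m.+1 * n ^_ m)%N.
Proof.
rewrite ffactSS ffactnSr; case: (leqP m n) => h; last by rewrite ffact_small // !muln0.
rewrite [X in (_ = X + _)%N]mulnC -mulnDl; congr (_ * _)%N; lia.
Qed.

Lemma vnorm_subS s (t : vec s) j : (0 < t j)%N -> vnorm (vsub t (unitv j)) = (vnorm t).-1.
Proof.
move=> h; rewrite /vnorm (bigD1 j) //= [in RHS](bigD1 j) //= vsubE unitvE eqxx.
have -> : (\sum_(i < s | i != j) vsub t (unitv j) i = \sum_(i < s | i != j) t i)%N.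
  by apply: eq_bigr => i hi; rewrite vsubE unitvE (negbTE hi) subn0.
set S := (\sum_(i < s | i != j) t i)%N; rewrite subn1; case: (t j) h => //.
Qed.

Lemma prod_fact_subS (R : numFieldType) s (t : vec s) j : (0 < t j)%N ->
  (\prod_(i < s) ((vsub t (unitv j)) i)`!%:R) * (t j)%:R = \prod_(i < s) ((t i)`!%:R : R).
Proof.
move=> h; rewrite (bigD1 j) //= [in RHS](bigD1 j) //= vsubE unitvE eqxx /=.
have -> : \prod_(i < s | i != j) ((vsub t (unitv j) i)`!%:R : R) = \prod_(i < s | i != j) (t i)`!%:R.
  by apply: eq_bigr => i hi; rewrite vsubE unitvE (negbTE hi) subn0.
case: (t j) h => // n _; rewrite factS subn1 /= natrM; ring.
Qed.

Lemma prod_fact_neq0 (R : numFieldType) s (t : vec s) : \prod_(i < s) ((t i)`!%:R : R) != 0.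
Proof. by apply/prodf_neq0 => i _; rewrite pnatr_eq0 -lt0n fact_gt0. Qed.

Lemma Hc_I2 (R : numFieldType) s (x : R) M (t : vec s) :
  Hc x M.+1 t = Hc x M t + \sum_(j < s) (0 < t j)%:R * (- x) * Hc x M (vsub t (unitv j)).
Proof.
set F := \prod_(i < s) ((t i)`!%:R : R).
have hF : F != 0 by apply: prod_fact_neq0.
have per : forall j, (0 < t j)%:R * (- x) * Hc x M (vsub t (unitv j)) =
    (-x) ^+ (vnorm t) * (M ^_ (vnorm t).-1)%:R / F * (t j)%:R.
  move=> j; case: (posnP (t j)) => [->|hp]; first by rewrite !mul0r mulr0.
  rewrite mul1r /Hc vnorm_subS // /F -(prod_fact_subS R hp).
  have [T hT] : exists T, vnorm t = T.+1.
    by exists (vnorm t).-1; have := le_vnorm t j; lia.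
  have htj : (t j)%:R != 0 :> R by rewrite pnatr_eq0 -lt0n.
  have hF' := prod_fact_neq0 R (vsub t (unitv j)).
  rewrite hT /= exprS invfM.
  set a := (_ ^+ T); set b := (_ ^_ T)%:R; set c := (_^-1).
  rewrite [X in _ = X](_ : _ = (-x) * (a * b * c) * ((t j)%:R^-1 * (t j)%:R)); last by ring.
  by rewrite mulVf // mulr1 !mulrA.
rewrite (eq_bigr _ (fun j _ => per j)) -mulr_sumr -natr_sum.
have -> : (\sum_(i < s) t i)%N = vnorm t by [].
rewrite /Hc -/F; case: (vnorm t) => [|T]; first by rewrite !ffactn0 mulr0 addr0.
rewrite ffact_pascal natrD natrM /=; ring.
Qed.
Lemma vsub_subS s (v t : vec s) j : (0 < t j)%N ->
  vsub (vsub v (unitv j)) (vsub t (unitv j)) = vsub v t.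
Proof.
move=> h; apply/ffunP => i; rewrite !ffunE; case: (eqVneq i j) => [->|_] /=; last by rewrite !subn0.
rewrite !subn1; lia.
Qed.

Lemma vle_shift s (t v : vec s) j : (0 < t j)%N ->
  vle t v = (0 < v j)%N && vle (vsub t (unitv j)) (vsub v (unitv j)).
Proof.
move=> ht; apply/idP/andP => [/forallP h|[hv /forallP h]].
  split; first by have := h j; lia.
  by apply/forallP => i; rewrite !ffunE leq_sub2r.
apply/forallP => i; have := h i; rewrite !ffunE.
case: (eqVneq i j) => [->|_] /=; last by rewrite !subn0.
rewrite !subn1; lia.
Qed.

Lemma term_I2 (R : numFieldType) s (p : 'I_s -> R) m M v t :
  term p m M.+1 v t = term p m M v t + \sum_(j < s) (- (plast p)^-1) * (0 < v j)%:R *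
     ((0 < t j)%:R * term p m M (vsub v (unitv j)) (vsub t (unitv j))).
Proof.
rewrite /term Hc_I2 mulrDr mulrDl; congr (_ + _).
rewrite mulr_sumr mulr_suml; apply: eq_bigr => j _.
case: (posnP (t j)) => [_|hp]; first by rewrite !(mul0r, mulr0).
rewrite vsub_subS // (vle_shift v hp).
case: (0 < v j)%N; case: (vle _ _) => /=; rewrite ?(mul0r, mulr0, mul1r, mulr1) //; ring.
Qed.

Lemma vle_addS s (t v : vec s) j : (0 < v j)%N -> vle t (vsub v (unitv j)) ->
  vle (vadd t (unitv j)) v.
Proof.
move=> hv /forallP h; apply/forallP => i; have := h i; rewrite !ffunE.
case: (eqVneq i j) => [->|_] /=; last by rewrite !subn0 addn0.
rewrite subn1 addn1; lia.
Qed.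

Lemma BS_shift (R : pzRingType) s N j (X : vec s -> R) :
  (forall t, ~~ inbox N (vadd t (unitv j)) -> X t = 0) ->
  BS N (fun t => (0 < t j)%:R * X (vsub t (unitv j))) = BS N X.
Proof.
move=> hX.
transitivity (BS N (fun t => BS N (fun t' => (vadd t' (unitv j) == t)%:R * X t'))).
  apply: BS_ext => t ht.
  transitivity (BS N (fun t' => (t' == vsub t (unitv j))%:R * ((0 < t j)%:R * X t'))).
    by rewrite (BS_dirac _ _ (fun t' => (0 < t j)%:R * X t')) (vle_inbox (vle_sub _ _) ht) mul1r.
  apply: BS_ext => t' _; rewrite veq_add_sub.
  by case: (0 < t j)%N; case: (t' == _); rewrite /= ?(mul0r, mulr0, mul1r).
rewrite /BS exchange_big; apply: eq_bigr => l _ /=.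
transitivity (BS N (fun t => (t == vadd (vo l) (unitv j))%:R * X (vo l))).
  by apply: eq_bigr => l' _; rewrite eq_sym.
rewrite BS_diracc; case: (boolP (inbox _ _)) => h; first by rewrite mul1r.
by rewrite hX // mulr0.
Qed.

Lemma G_I2 (R : numFieldType) s (p : 'I_s -> R) m M v :
  G p m M.+1 v = G p m M v - (plast p)^-1 * \sum_(j < s) (0 < v j)%:R * G p m M (vsub v (unitv j)).
Proof.
have hN := inbox_vnorm v.
rewrite !(G_BS _ _ _ hN) (BS_ext (G := fun t => term p m M v t + \sum_(j < s) (- (plast p)^-1) * (0 < v j)%:R *
     ((0 < t j)%:R * term p m M (vsub v (unitv j)) (vsub t (unitv j))))); last by move=> t _; exact: term_I2.
rewrite BS_add BS_sum mulr_sumr -sumrN; congr (_ + _); apply: eq_bigr => j _.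
rewrite BS_mull; case: (posnP (v j)) => [_|hv]; first by rewrite !(mul0r, mulr0, oppr0).
rewrite BS_shift; last first.
  move=> t ht; rewrite /term; case: (boolP (vle _ _)) => h; last by rewrite !mul0r.
  by move/negP: ht; case; apply: vle_inbox (vle_addS hv h) hN.
rewrite (G_BS _ _ _ (vle_inbox (vle_sub _ _) hN)); ring.
Qed.

Lemma G_I1 (R : fieldType) s (p : 'I_s -> R) m M v i :
  G p (fun j => ((i == j) + m j)%N) M v =
  G p m M v + (0 < v i)%:R * (p i)^-1 * G p m M (vsub v (unitv i)).
Proof.
have hN := inbox_vnorm v.
rewrite !(G_BS _ _ _ hN) (G_BS _ _ _ (vle_inbox (vle_sub _ _) hN)) -BS_mull -BS_add.
by apply: BS_ext => t _; rewrite term_I1.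
Qed.

Lemma vnorm_eq0 s (t : vec s) : (vnorm t == 0)%N = (t == vzero s).
Proof.
rewrite /vnorm sum_nat_eq0; apply/forallP/eqP => [h|->] ; last by move=> i; rewrite ffunE.
by apply/ffunP => i; rewrite ffunE; apply/eqP; apply: h.
Qed.

Lemma term0 (R : numFieldType) s (p : 'I_s -> R) m v t :
  term p m 0 v t = (t == vzero s)%:R * Bc p m v.
Proof.
rewrite /term /Hc ffact0n vnorm_eq0; case: eqP => [->|_]; last by rewrite !(mul0r, mulr0).
have -> : vle (vzero s) v by apply/forallP => i; rewrite ffunE.
have -> : vsub v (vzero s) = v by apply/ffunP => i; rewrite !ffunE subn0.
have -> : vnorm (vzero s) = 0%N by apply/eqP; rewrite vnorm_eq0.
rewrite big1 ?invr1 ?expr0 //; last by move=> i _; rewrite ffunE.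
by rewrite /= !(mul1r, mulr1).
Qed.

Lemma G0 (R : numFieldType) s (p : 'I_s -> R) m v : G p m 0 v = Bc p m v.
Proof.
have hN := inbox_vnorm v.
rewrite (G_BS _ _ _ hN) (BS_ext (G := fun t => (t == vzero s)%:R * Bc p m v)); last by move=> t _; exact: term0.
rewrite BS_diracc; have -> // : inbox (vnorm v).+1 (vzero s).
  by apply/forallP => i; rewrite ffunE.
by rewrite mul1r.
Qed.

Lemma Bc0 (R : fieldType) s (p : 'I_s -> R) v : Bc p (fun _ => 0%N) v = (v == vzero s)%:R.
Proof.
rewrite /Bc; case: eqP => [->|hne].
  by rewrite big1 // => i _; rewrite ffunE bin0 expr0 mulr1.
have [i hi] : exists i, v i != 0%N.
  apply/existsP; apply: contraNT (introN eqP hne) => /existsPn h.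
  by apply/eqP/ffunP => i; rewrite ffunE; apply/eqP; move: (h i); rewrite negbK.
by rewrite (bigD1 i) //= bin0n (negbTE hi) mul0r mul0r.
Qed.
Definition mi s (w : nat -> 'I_s.+1) k : 'I_s -> nat := fun i => mcount w k (lift ord_max i).
Definition Pw (R : pzRingType) s (p : 'I_s -> R) (w : nat -> 'I_s.+1) k : R :=
  \prod_(j < k) pI p (w j.+1).
Definition fr (R : fieldType) s (a b : vec s) : R := \prod_(i < s) ((a i)`!%:R / (b i)`!%:R).
Arguments fr {R s}.

Lemma mcountS s (w : nat -> 'I_s.+1) k j :
  mcount w k.+1 j = ((w 1%N == j) + mcount (shift w) k j)%N.
Proof.
by rewrite /mcount /= (iotaDl 1 1 k) count_map.
Qed.

Lemma PwS (R : pzRingType) s (p : 'I_s -> R) w k :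
  Pw p w k.+1 = pI p (w 1%N) * Pw p (shift w) k.
Proof. by rewrite /Pw big_ord_recl. Qed.

Lemma G_ext (R : fieldType) s (p : 'I_s -> R) m m' M v :
  (forall i, m i = m' i) -> G p m M v = G p m' M v.
Proof.
move=> h; rewrite /G; apply: sumle_ext => t _; rewrite /term /Bc.
by congr (_ * _); apply: eq_bigr => i _; rewrite h.
Qed.

Lemma sumle_neg (R : zmodType) s (v : vec s) (F : vec s -> R) :
  sumle v (fun t => - F t) = - sumle v F.
Proof. by rewrite /sumle sumrN. Qed.

Lemma fr_refl (R : numFieldType) s (a : vec s) : (fr a a : R) = 1.
Proof. by rewrite /fr big1 // => i _; rewrite divff // pnatr_eq0 -lt0n fact_gt0. Qed.

Lemma fr_S (R : numFieldType) s (a b : vec s) i : (0 < a i)%N ->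
  (a i)%:R * fr (vsub a (unitv i)) b = (fr a b : R).
Proof.
move=> h; rewrite /fr (bigD1 i) //= [in RHS](bigD1 i) //= vsubE unitvE eqxx /=.
have -> : \prod_(j < s | j != i) ((vsub a (unitv i) j)`!%:R / (b j)`!%:R : R) =
          \prod_(j < s | j != i) ((a j)`!%:R / (b j)`!%:R).
  by apply: eq_bigr => j hj; rewrite vsubE unitvE (negbTE hj) subn0.
case: (a i) h => // n _; rewrite factS subn1 /= natrM; ring.
Qed.

Lemma vsub_comm s (a b : vec s) i :
  vsub (vsub a (unitv i)) b = vsub (vsub a b) (unitv i).
Proof. by apply/ffunP => j; rewrite !ffunE subnAC. Qed.

Lemma stepD (R : numFieldType) s (p : 'I_s -> R) m M (a b : vec s) i (X : R) :
  (a i)%:R * (X * (vle b (vsub a (unitv i)))%:R * fr (vsub a (unitv i)) b *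
     G p m M (vsub (vsub a (unitv i)) b))
  = X * ((vle b a)%:R * fr a b * ((0 < vsub a b i)%:R * G p m M (vsub (vsub a b) (unitv i)))).
Proof.
rewrite vsub_comm vsubE; case: (posnP (a i)) => [ha|ha].
  by rewrite ha /= !(mul0r, mulr0).
case: (boolP (vle b a)) => hb; last first.
  have -> : vle b (vsub a (unitv i)) = false.
    by apply/negP => /vle_subA; rewrite (negbTE hb).
  by rewrite !(mul0r, mulr0).
case: (ltnP (b i) (a i)) => hlt.
  rewrite (vle_subB hb hlt) subn_gt0 hlt -(fr_S R b ha) /=; ring.
have -> : vle b (vsub a (unitv i)) = false.
  by apply/negP => /(vle_subC ha); rewrite ltnNge hlt.
have -> : (0 < a i - b i)%N = false by apply/negP; lia.
by rewrite !(mul0r, mulr0).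
Qed.

Lemma A0_closed (R : numFieldType) s (p : 'I_s -> R) (hp : forall i, p i != 0)
  (hP : plast p != 0) k :
  forall w a b, A0 p k w a b =
    Pw p w k * (vle b a)%:R * fr a b * G p (mi w k) (mcount w k ord_max) (vsub a b).
Proof.
elim: k => [|k IH] w a b.
  rewrite /= /IdM /Pw big_ord0 mul1r (G_ext _ _ (m' := fun _ => 0%N)) // G0 Bc0.
  case: (eqVneq a b) => [<-|hne].
    rewrite vle_refl fr_refl; have -> : vsub a a == vzero s.
      by apply/eqP/ffunP => i; rewrite !ffunE subnn.
    by rewrite /= mulr1n !mulr1.
  case: (boolP (vle b a)) => hb; last by rewrite /= mulr0n !mul0r.
  case: eqP => [e|]; last by rewrite /= mulr0n mulr0.
  case/eqP: hne; apply/ffunP => i; have := forallP hb i.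
  have := congr1 (fun f : vec s => f i) e; rewrite vsubE ffunE.
  move=> /eqP; rewrite subn_eq0 => h1 h2; apply/eqP; by rewrite eqn_leq h1 h2.
rewrite /A0 -/A0 /mulM.
case: (unliftP ord_max (w 1%N)) => [i hw|hw].
  rewrite (sumle_ext (G := fun l => p i * (IdM R a l * A0 p k (shift w) l b) +
      DM R i a l * A0 p k (shift w) l b)); last first.
    move=> t _; rewrite /A01.
    have -> : unlift ord_max (w 1%N) = Some i by rewrite hw liftK.
    by rewrite mulrDl mulrA.
  rewrite sumle_add sumle_mull sumle_Id sumle_D !IH.
  rewrite PwS /pI.
  have -> : unlift ord_max (w 1%N) = Some i by rewrite hw liftK.
  rewrite (G_ext _ _ (m := mi w k.+1) (m' := fun j => ((i == j) + mi (shift w) k j)%N)); last first.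
    by move=> j; rewrite /mi mcountS hw (inj_eq lift_inj).
  rewrite mcountS hw eq_sym (negbTE (neq_lift _ _)) add0n G_I1 stepD.
  by have hpi := hp i; field.
have E : sumle a (fun l => A01 p w a l * A0 p k (shift w) l b) =
    sumle a (fun l => plast p * (IdM R a l * A0 p k (shift w) l b) +
      - \sum_(j < s) DM R j a l * A0 p k (shift w) l b).
  apply: sumle_ext => t _; rewrite /A01.
  have -> : unlift ord_max (w 1%N) = None by rewrite hw unlift_none.
  by rewrite mulrBl mulrA mulr_suml.
rewrite E.
rewrite sumle_add sumle_neg sumle_mull sumle_Id sumle_sum.
rewrite (eq_bigr (fun j => Pw p (shift w) k * ((vle b a)%:R * fr a b * ((0 < vsub a b j)%:R *
   G p (mi (shift w) k) (mcount (shift w) k ord_max) (vsub (vsub a b) (unitv j)))))); last first.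
  by move=> j _; rewrite sumle_D IH stepD.
rewrite IH PwS /pI.
have -> : unlift ord_max (w 1%N) = None by rewrite hw unlift_none.
rewrite (G_ext _ _ (m := mi w k.+1) (m' := mi (shift w) k)); last first.
  by move=> j; rewrite /mi mcountS hw (negbTE (neq_lift _ _)).
rewrite mcountS hw eqxx add1n G_I2 -mulr_sumr.
rewrite (eq_bigr (fun j => (vle b a)%:R * fr a b * ((0 < vsub a b j)%:R *
   G p (mi (shift w) k) (mcount (shift w) k ord_max) (vsub (vsub a b) (unitv j))))) //.
rewrite -mulr_sumr -[\sum_(j < s) (_ * G _ _ _ _)]/(\sum_(j < s) _).
by field.
Qed.
Lemma fact_neq0 (R : numFieldType) n : (n`!%:R : R) != 0.
Proof. by rewrite pnatr_eq0 -lt0n fact_gt0. Qed.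

Lemma term_target (R : numFieldType) s (p : 'I_s -> R) (hp : forall i, p i != 0)
  (q r t : vec s) (m : 'I_s.+1 -> nat) :
  vle t (vsub q r) ->
  fr q r * term p (fun i => m (lift ord_max i)) (m ord_max) (vsub q r) t =
  (if [forall i, (q i - r i - m (lift ord_max i) <= t i)%N]
          && (vnorm t <= m ord_max)%N
       then (-1) ^+ vnorm t * (plast p)^-1 ^+ vnorm t
            * ((m ord_max)`!%:R / (m ord_max - vnorm t)`!%:R)
            * \prod_(i < s)
                ((m (lift ord_max i))`!%:R * (q i)`!%:R
                 / ((m (lift ord_max i) - (q i - r i - t i))`!%:R
                    * (q i - r i - t i)`!%:R * (t i)`!%:R * (r i)`!%:R
                    * p i ^+ (q i - r i - t i)))
       else 0).
Proof.
move=> ht; rewrite /term ht mul1r /Hc /Bc.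
have -> : \prod_(i < s) ('C(m (lift ord_max i), vsub (vsub q r) t i)%:R *
     (p i)^-1 ^+ vsub (vsub q r) t i) = \prod_(i < s) ('C(m (lift ord_max i), q i - r i - t i)%:R *
     (p i)^-1 ^+ (q i - r i - t i)) by apply: eq_bigr => i _; rewrite !vsubE.
case: ifP => [/andP [/forallP hc hT] | hcf].
  rewrite [(- (plast p)^-1) ^+ _]exprNn.
  have -> : ((m ord_max) ^_ (vnorm t))%:R = ((m ord_max)`!%:R / (m ord_max - vnorm t)`!%:R : R).
    by rewrite -(ffact_fact hT) natrM mulfK // fact_neq0.
  suff key : fr q r * ((\prod_(i < s) ((t i)`!%:R : R))^-1 *
      \prod_(i < s) ('C(m (lift ord_max i), q i - r i - t i)%:R * (p i)^-1 ^+ (q i - r i - t i)))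
     = \prod_(i < s)
                ((m (lift ord_max i))`!%:R * (q i)`!%:R
                 / ((m (lift ord_max i) - (q i - r i - t i))`!%:R
                    * (q i - r i - t i)`!%:R * (t i)`!%:R * (r i)`!%:R
                    * p i ^+ (q i - r i - t i))).
    rewrite -key; ring.
  rewrite /fr -prodfV -!big_split /=; apply: eq_bigr => i _.
  have hu : (q i - r i - t i <= m (lift ord_max i))%N by have := hc i; lia.
  rewrite -(bin_fact hu) !natrM exprVn.
  have h1 := fact_neq0 R (q i - r i - t i).
  have h2 := fact_neq0 R (m (lift ord_max i) - (q i - r i - t i)).
  have h3 := fact_neq0 R (t i).
  have h4 := fact_neq0 R (r i).
  have h5 := hp i.
  by field; rewrite expf_neq0 // h1 h2 h3 h4.
case: (boolP [forall i, (q i - r i - m (lift ord_max i) <= t i)%N]) => hf; last first.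
  move/forallPn: hf => [i hi]; rewrite [\prod_(i0 < s) ('C(_, _)%:R * _)](bigD1 i) //= bin_small; last by lia.
  by rewrite !(mul0r, mulr0).
move: hcf; rewrite hf /= => /negbT; rewrite -ltnNge => hlt.
by rewrite ffact_small // !(mul0r, mulr0).
Qed.

Lemma pI_neq0 (R : numFieldType) s (p : 'I_s -> R) (hp : forall i, p i != 0)
  (hP : plast p != 0) j : pI p j != 0.
Proof. by rewrite /pI; case: (unlift _ _). Qed.

Lemma AM_closed (R : numFieldType) s (p : 'I_s -> R) (hp : forall i, p i != 0)
  (hP : plast p != 0) w k (q r : vec s) : vle r q ->
  AM p w k q r = fr q r * G p (mi w k) (mcount w k ord_max) (vsub q r).
Proof.
move=> hrq; rewrite /AM (A0_closed hp hP) hrq -/(Pw p w k).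
have hPw : Pw p w k != 0 by apply/prodf_neq0 => j _; exact: pI_neq0.
by rewrite /= mulr1n mulr1 -!mulrA mulKf.
Qed.

Lemma part1 (R : numFieldType) s (p : 'I_s -> R) (hp : forall i, p i != 0)
  (hP : plast p != 0) w k (q r : vec s) : vle r q ->
     let m := mcount w k in
     AM p w k q r =
     sumle [ffun i => (q i - r i)%N] (fun t =>
       if [forall i, (q i - r i - m (lift ord_max i) <= t i)%N]
          && (vnorm t <= m ord_max)%N
       then (-1) ^+ vnorm t * (plast p)^-1 ^+ vnorm t
            * ((m ord_max)`!%:R / (m ord_max - vnorm t)`!%:R)
            * \prod_(i < s)
                ((m (lift ord_max i))`!%:R * (q i)`!%:R
                 / ((m (lift ord_max i) - (q i - r i - t i))`!%:R
                    * (q i - r i - t i)`!%:R * (t i)`!%:R * (r i)`!%:R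
                    * p i ^+ (q i - r i - t i)))
       else 0).
Proof.
move=> hrq m; rewrite (AM_closed hp hP _ _ hrq) /G -sumle_mull.
by apply: sumle_ext => t ht; rewrite -term_target.
Qed.
Lemma expn_mono a b e : (a <= b)%N -> (a ^ e <= b ^ e)%N.
Proof. by move=> h; elim: e => // e IH; rewrite !expnS leq_mul. Qed.

Lemma ffact_le n k : (n ^_ k <= n ^ k)%N.
Proof.
elim: k => // k IH; rewrite ffactnSr expnSr; apply: leq_mul => //; exact: leq_subr.
Qed.

Lemma bin_le n k : ('C(n, k) <= n ^ k)%N.
Proof.
apply: leq_trans (ffact_le n k); rewrite -bin_ffact; apply: leq_pmulr; exact: fact_gt0.
Qed.

Lemma vnorm_mono s (t v : vec s) : vle t v -> (vnorm t <= vnorm v)%N.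
Proof. by move=> /forallP h; apply: leq_sum => i _; apply: h. Qed.

Lemma natbound1 s (m : 'I_s -> nat) M (t v : vec s) : vle t v ->
  (M ^ vnorm t * \prod_(i < s) m i ^ (v i - t i) <=
   \prod_(i < s) (maxn 1 (m i)) ^ v i * (maxn 1 M) ^ vnorm v)%N.
Proof.
move=> ht; rewrite mulnC; apply: leq_mul.
  apply: leq_prod => i _; apply: leq_trans (expn_mono _ (leq_maxr 1 (m i))) _.
  by apply: leq_pexp2l; [rewrite leq_max | exact: leq_subr].
apply: leq_trans (expn_mono _ (leq_maxr 1 M)) _.
by apply: leq_pexp2l; [rewrite leq_max | exact: vnorm_mono].
Qed.

Lemma natbound2 s (m : 'I_s -> nat) M k (t v q : vec s) : vle t v -> vle v q ->
  (forall i, (m i <= k)%N) -> (M <= k)%N -> (1 <= k)%N ->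
  (M ^ vnorm t * \prod_(i < s) m i ^ (v i - t i) <= k ^ vnorm q)%N.
Proof.
move=> ht hv hm hM hk.
apply: (@leq_trans (k ^ vnorm t * \prod_(i < s) k ^ (v i - t i))).
  apply: leq_mul; first exact: expn_mono.
  by apply: leq_prod => i _; apply: expn_mono.
rewrite -expn_sum -expnD; apply: leq_pexp2l => //.
have -> : (vnorm t + \sum_(i < s) (v i - t i) = vnorm v)%N.
  rewrite /vnorm -big_split /=; apply: eq_bigr => i _.
  by rewrite subnKC //; apply: (forallP ht).
exact: vnorm_mono.
Qed.

Lemma term_bound (R : realFieldType) s (p : 'I_s -> R) (hp : forall i, 0 < p i)
  (hP : 0 < plast p) (c : R) (hc1 : 1 <= c) (hcP : (plast p)^-1 <= c)
  (hcp : forall i, (p i)^-1 <= c) m M (q v t : vec s) : vle v q ->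
  `|term p m M v t| <= c ^+ (vnorm q) * (M ^ vnorm t)%:R *
     (c ^+ (vnorm q) * (\prod_(i < s) m i ^ (v i - t i))%:R).
Proof.
have hc0 : 0 <= c by apply: le_trans hc1; exact: ler01.
have hcX : forall n, 0 <= c ^+ n by move=> n; apply: exprn_ge0.
move=> hvq; rewrite /term; case: (boolP (vle t v)) => ht; last first.
  by rewrite /= mulr0n !mul0r normr0 mulr_ge0 // mulr_ge0.
rewrite /= mulr1n mul1r normrM; apply: ler_pM => //.
  rewrite /Hc !normrM normrX normrN normr_nat (gtr0_norm (_ : 0 < (plast p)^-1)) ?invr_gt0 //.
  have hF : 0 < \prod_(i < s) ((t i)`!%:R : R).
    by rewrite -natr_prod ltr0n prodn_gt0 // => i; exact: fact_gt0.
  rewrite (gtr0_norm (_ : 0 < _^-1)) ?invr_gt0 // -[X in _ <= X]mulr1.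
  have hPi : 0 <= (plast p)^-1 by rewrite invr_ge0 ltW.
  have ha : 0 <= (plast p)^-1 ^+ vnorm t by apply: exprn_ge0.
  have hb : 0 <= (M ^_ vnorm t)%:R :> R by apply: ler0n.
  have hd : 0 <= (\prod_(i < s) ((t i)`!%:R : R))^-1 by rewrite invr_ge0 ltW.
  apply: ler_pM => //; first exact: mulr_ge0.
    apply: ler_pM => //.
      apply: le_trans (lerXn2r _ _ _ hcP) _; rewrite ?nnegrE //.
      by apply: ler_weXn2l => //; apply: leq_trans (vnorm_mono ht) (vnorm_mono hvq).
    by rewrite ler_nat ffact_le.
  by rewrite invf_le1 // -natr_prod ler1n prodn_gt0 // => i; exact: fact_gt0.
rewrite /Bc normr_prod mulrC natr_prod -(prodrXr c) -big_split /=.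
apply: ler_prod => i _; rewrite normrM normr_nat normrX (gtr0_norm (_ : 0 < (p i)^-1)) ?invr_gt0 //.
have hpi : 0 <= (p i)^-1 by rewrite invr_ge0 ltW.
have ha : 0 <= (p i)^-1 ^+ vsub v t i by apply: exprn_ge0.
rewrite vsubE natrX in ha *; apply/andP; split; first by rewrite mulr_ge0.
apply: ler_pM => //.
  by rewrite -natrX ler_nat bin_le.
apply: le_trans (lerXn2r _ _ _ (hcp i)) _; rewrite ?nnegrE //.
apply: ler_weXn2l => //; apply: leq_trans (leq_subr _ _) _.
exact: (forallP hvq).
Qed.
Lemma G_bound (R : realFieldType) s (p : 'I_s -> R) (hp : forall i, 0 < p i)
  (hP : 0 < plast p) (c : R) (hc1 : 1 <= c) (hcP : (plast p)^-1 <= c)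
  (hcp : forall i, (p i)^-1 <= c) m M (q v : vec s) (Yb : nat) : vle v q ->
  (forall t, vle t v -> (M ^ vnorm t * \prod_(i < s) m i ^ (v i - t i) <= Yb)%N) ->
  `|G p m M v| <= ((vnorm q).+1 ^ s)%:R * (c ^+ vnorm q * c ^+ vnorm q * Yb%:R).
Proof.
move=> hvq hY.
have hc0 : 0 <= c by apply: le_trans hc1; exact: ler01.
have hcQ : 0 <= c ^+ vnorm q * c ^+ vnorm q by rewrite mulr_ge0 ?exprn_ge0.
have hN := vle_inbox hvq (inbox_vnorm q).
rewrite (G_BS _ _ _ hN) /BS; apply: le_trans; first exact: ler_norm_sum.
apply: (le_trans (y := \sum_(l : {ffun 'I_s -> 'I_(vnorm q).+1}) (c ^+ vnorm q * c ^+ vnorm q * Yb%:R))).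
  apply: ler_sum => l _; case: (boolP (vle (vo l) v)) => ht.
    apply: le_trans (term_bound hp hP hc1 hcP hcp m M (vo l) hvq) _.
    rewrite mulrACA -natrM; apply: ler_wpM2l => //.
    by rewrite ler_nat hY.
  by rewrite /term (negbTE ht) /= mulr0n !mul0r normr0 mulr_ge0.
by rewrite sumr_const card_ffun !card_ord mulr_natl.
Qed.

Lemma fr_ge0 (R : realFieldType) s (q r : vec s) : 0 <= (fr q r : R).
Proof. by apply: prodr_ge0 => i _; rewrite divr_ge0 ?ler0n. Qed.

Lemma fr_le (R : realFieldType) s (q r : vec s) : (fr q r : R) <= \prod_(i < s) (q i)`!%:R.
Proof.
apply: ler_prod => i _; rewrite divr_ge0 ?ler0n //=.
have hr : 0 < ((r i)`!%:R : R) by rewrite ltr0n fact_gt0.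
rewrite ler_pdivrMr // ler_peMr ?ler0n //.
by rewrite ler1n fact_gt0.
Qed.

Lemma fr_ge1 (R : realFieldType) s (q r : vec s) : vle r q -> 1 <= (fr q r : R).
Proof.
move=> /forallP h; rewrite /fr.
apply: (le_trans (y := \prod_(i < s) (1 : R))); first by rewrite big1_eq.
apply: ler_prod => i _; rewrite ler01 /=.
have hr : 0 < ((r i)`!%:R : R) by rewrite ltr0n fact_gt0.
by rewrite ler_pdivlMr // mul1r ler_nat leq_fact.
Qed.

Lemma ffact_lowbound m v : (v < m)%N -> (m ^ v <= (v.+1) ^ v * m ^_ v)%N.
Proof.
move=> h; rewrite ffact_prod.
have e1 : (m ^ v = \prod_(i < v) m)%N by rewrite prod_nat_const card_ord.
have e2 : (v.+1 ^ v = \prod_(i < v) v.+1)%N by rewrite prod_nat_const card_ord.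
rewrite e1 e2 -big_split /=; apply: leq_prod => i _.
have := ltn_ord i; nia.
Qed.

Lemma lowbin m v q : (v < m)%N -> (v <= q)%N ->
  (m ^ v <= 'C(m, v) * ((q.+1) ^ q * q`!))%N.
Proof.
move=> h hq; apply: leq_trans (ffact_lowbound h) _.
rewrite -bin_ffact mulnCA; apply: leq_mul => //; apply: leq_mul; last exact: leq_fact.
apply: leq_trans (expn_mono _ (_ : v.+1 <= q.+1)%N) _ => //.
by apply: leq_pexp2l.
Qed.
Lemma mcount_le s (w : nat -> 'I_s.+1) k j : (mcount w k j <= k)%N.
Proof. by apply: leq_trans (count_size _ _) _; rewrite size_iota. Qed.

Lemma vnorm_sub s (q r : vec s) : vle r q -> vnorm (vsub q r) = (vnorm q - vnorm r)%N.
Proof.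
move=> /forallP h; rewrite /vnorm -sumnB; last by move=> i _; apply: h.
by apply: eq_bigr => i _; rewrite vsubE.
Qed.

Lemma cfacts (R : realFieldType) s (p : 'I_s -> R) (hp : forall i, 0 < p i)
  (hP : 0 < plast p) :
  let c := 1 + (plast p)^-1 + \sum_(i < s) (p i)^-1 in
  [/\ 1 <= c, (plast p)^-1 <= c & forall i, (p i)^-1 <= c].
Proof.
move=> c.
have hS : 0 <= \sum_(i < s) (p i)^-1 by apply: sumr_ge0 => i _; rewrite invr_ge0 ltW.
have hPi : 0 <= (plast p)^-1 by rewrite invr_ge0 ltW.
split; rewrite /c; first lra; first lra.
move=> i; have : (p i)^-1 <= \sum_(j < s) (p j)^-1.
  rewrite (bigD1 i) //= lerDl; apply: sumr_ge0 => j _; rewrite invr_ge0 ltW //.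
lra.
Qed.

Unset Implicit Arguments.
Set Strict Implicit.

Theorem mainTheorem17 (R : realFieldType) (s : nat) (hs : (1 <= s)%N) :
  (* explicit formula *)
  (forall (p : 'I_s -> R),
     (forall i, 0 < p i < 1) -> \sum_(i < s) p i < 1 ->
   forall (w : nat -> 'I_s.+1) (k : nat), (1 <= k)%N ->
   forall q r : vec s, vle r q ->
     let m := mcount w k in
     AM p w k q r =
     sumle [ffun i => (q i - r i)%N] (fun t =>
       if [forall i, (q i - r i - m (lift ord_max i) <= t i)%N]
          && (vnorm t <= m ord_max)%N
       then (-1) ^+ vnorm t * (plast p)^-1 ^+ vnorm t
            * ((m ord_max)`!%:R / (m ord_max - vnorm t)`!%:R)
            * \prod_(i < s)
                ((m (lift ord_max i))`!%:R * (q i)`!%:R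
                 / ((m (lift ord_max i) - (q i - r i - t i))`!%:R
                    * (q i - r i - t i)`!%:R * (t i)`!%:R * (r i)`!%:R
                    * p i ^+ (q i - r i - t i)))
       else 0)) /\
  (* upper bounds, K depending only on q and p *)
  (forall (p : 'I_s -> R),
     (forall i, 0 < p i < 1) -> \sum_(i < s) p i < 1 ->
   forall q : vec s,
   exists K : R, 1 <= K /\
   forall (w : nat -> 'I_s.+1) (k : nat), (1 <= k)%N ->
   forall r : vec s, vle r q ->
     `|AM p w k q r| <=
        K * (\prod_(i < s) (mtilde w k (lift ord_max i))%:R ^+ (q i - r i))
          * (mtilde w k ord_max)%:R ^+ (vnorm q - vnorm r)
     /\ `|AM p w k q r| <= K * k%:R ^+ vnorm q) /\
  (* lower bound, K' depending only on q *)
  (forall q : vec s,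
   exists K' : R, 0 < K' /\
   forall (p : 'I_s -> R),
     (forall i, 0 < p i < 1) -> \sum_(i < s) p i < 1 ->
   forall (w : nat -> 'I_s.+1) (k : nat), (1 <= k)%N ->
   forall r : vec s, vle r q ->
     (forall j, (1 <= j <= k)%N -> w j != ord_max) ->
     (forall i : 'I_s, (q i - r i < mcount w k (lift ord_max i))%N) ->
     K' * \prod_(i < s) (mcount w k (lift ord_max i))%:R ^+ (q i - r i)
       <= AM p w k q r).
Proof.
have pos : forall p : 'I_s -> R, (forall i, 0 < p i < 1) -> \sum_(i < s) p i < 1 ->
    (forall i, 0 < p i) /\ 0 < plast p.
  move=> p hp hsum; split; first by move=> i; case/andP: (hp i).
  by rewrite /plast subr_gt0.
split; [|split].
- move=> p hp hsum w k _ q r hrq.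
  have [hp0 hP0] := pos p hp hsum.
  apply: part1 => //; [by move=> i; apply: lt0r_neq0 | exact: lt0r_neq0].
- move=> p hp hsum q.
  have [hp0 hP0] := pos p hp hsum.
  have [hc1 hcP hcp] := cfacts hp0 hP0.
  set c := 1 + (plast p)^-1 + \sum_(i < s) (p i)^-1 in hc1 hcP hcp.
  set F0 := \prod_(i < s) ((q i)`!%:R : R).
  have hF0 : 1 <= F0.
    by rewrite /F0 -natr_prod ler1n prodn_gt0 // => i; exact: fact_gt0.
  have hN : 1 <= ((vnorm q).+1 ^ s)%:R :> R by rewrite ler1n expn_gt0.
  have hc0 : 0 <= c by apply: le_trans hc1; exact: ler01.
  exists (F0 * ((vnorm q).+1 ^ s)%:R * (c ^+ vnorm q * c ^+ vnorm q)).
  split; first by rewrite !mulr_ege1 ?exprn_ege1.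
  move=> w k hk r hrq.
  have hpn : forall i, p i != 0 by move=> i; apply: lt0r_neq0.
  rewrite (AM_closed hpn (lt0r_neq0 hP0) _ _ hrq) normrM (ger0_norm (fr_ge0 R q r)).
  have hF : 0 <= F0 by apply: le_trans hF0; exact: ler01.
  have bnd : forall Yb : nat, (forall t, vle t (vsub q r) ->
      (mcount w k ord_max ^ vnorm t * \prod_(i < s) mi w k i ^ (vsub q r i - t i) <= Yb)%N) ->
      (fr q r : R) * `|G p (mi w k) (mcount w k ord_max) (vsub q r)| <=
      F0 * ((vnorm q).+1 ^ s)%:R * (c ^+ vnorm q * c ^+ vnorm q) * Yb%:R.
    move=> Yb hY.
    have hG := G_bound hp0 hP0 hc1 hcP hcp (vle_sub q r) hY.
    apply: le_trans (ler_pM (fr_ge0 R q r) (normr_ge0 _) (fr_le R q r) hG) _.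
    by rewrite !mulrA.
  split.
    apply: le_trans (bnd _ (fun t ht => natbound1 (mi w k) (mcount w k ord_max) ht)) _.
    rewrite natrM natr_prod vnorm_sub // natrX -!mulrA; apply: ler_wpM2l => //.
    have E : \prod_i ((maxn 1 (mi w k i) ^ vsub q r i)%N%:R : R) =
      \prod_(i < s) (mtilde w k (lift ord_max i))%:R ^+ (q i - r i).
      by apply: eq_bigr => i _; rewrite natrX vsubE.
    by rewrite E natrX.
  apply: le_trans (bnd _ (fun t ht => natbound2 ht (vle_sub q r)
      (fun i => mcount_le w k (lift ord_max i)) (mcount_le w k ord_max) hk)) _.
  by rewrite [(k ^ _)%:R]natrX.
- move=> q.
  set K' := \prod_(i < s) (((q i).+1 ^ q i * (q i)`!)%:R : R)^-1.
  have hK' : 0 < K' by apply: prodr_gt0 => i _; rewrite invr_gt0 ltr0n muln_gt0 expn_gt0 fact_gt0.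
  exists K'; split => // p hp hsum w k hk r hrq hw hm.
  have [hp0 hP0] := pos p hp hsum.
  have hpn : forall i, p i != 0 by move=> i; apply: lt0r_neq0.
  rewrite (AM_closed hpn (lt0r_neq0 hP0) _ _ hrq).
  have -> : mcount w k ord_max = 0%N.
    rewrite /mcount; apply/eqP; rewrite -leqn0 leqNgt -has_count.
    by apply/hasPn => j; rewrite mem_iota => hj; apply: hw; lia.
  rewrite G0 /Bc /K' -big_split /=.
  apply: le_trans (ler_peMl _ (fr_ge1 _ hrq)); last first.
    by apply: prodr_ge0 => i _; rewrite mulr_ge0 ?ler0n ?exprn_ge0 ?invr_ge0 ?ltW.
  apply: ler_prod => i _; rewrite vsubE; apply/andP; split.
    by rewrite mulr_ge0 ?invr_ge0 ?ler0n ?exprn_ge0.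
  have hpi1 : 1 <= (p i)^-1 by rewrite invf_ge1 // ltW //; case/andP: (hp i).
  rewrite -[X in X <= _]mulr1; apply: ler_pM; rewrite ?mulr_ge0 ?invr_ge0 ?ler0n ?exprn_ge0 //.
    have hD : 0 < (((q i).+1 ^ q i * (q i)`!)%:R : R) by rewrite ltr0n muln_gt0 expn_gt0 fact_gt0.
    rewrite mulrC -natrX ler_pdivrMr // -natrM ler_nat.
    apply: lowbin; first exact: hm.
    exact: leq_subr.
  exact: exprn_ege1.
Qed.
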